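(* Let $X_P$ be a flag variety as in the context and $[\omega_0]\in\mathcal K(X_P)$ an integral Kähler class. For $n\in\mathbb Z_{>0}$ let $$\mathcal A_{[\omega_0]}(n):=\{m\in\mathbb Z_{>0}\ :\ 1\le m\le n,\ \exists\,\mathbf E\in\mathrm{Pic}(X_P)\text{ with }\mu_{[\omega_0]}(\mathbf E)=m\}.$$ Then $$\lim_{n\to+\infty}\frac{|\mathcal A_{[\omega_0]}(n)|}{n}=\frac{1}{\tau([\omega_0])},\qquad \tau([\omega_0]):=\gcd\{\deg_{\omega_0}(\mathscr O_\alpha(1))\ :\ \alpha\in\Delta\setminus I\}.$$
   Context: Let $G^{\mathbb C}$ be a connected, simply connected complex Lie group with simple Lie algebra $\mathfrak g^{\mathbb C}$. Fix a Cartan subalgebra, simple roots $\Delta$, root system $\Phi$, fundamental weights $\varpi_\alpha$, $I\subset\Delta$, and the parabolic subgroup $P=P_I$ with Lie algebra $\mathfrak h\oplus\bigoplus_{\alpha\in\Phi^+}\mathfrak g_\alpha\oplus\bigoplus_{\alpha\in\langle I\rangle^-}\mathfrak g_\alpha$ ($\langle I\rangle^-$: negative roots in the span of $I$); $X_P=G^{\mathbb C}/P$, $n_0=\dim_{\mathbb C}X_P$. For $\alpha\in\Delta\setminus I$, $\mathscr O_\alpha(1)=G^{\mathbb C}\times_P\mathbb C_{-\varpi_\alpha}$ is the homogeneous line bundle associated with the character of $P$ with differential $\varpi_\alpha$; these generate $\mathrm{Pic}(X_P)$. $\deg_{\omega_0}(\mathbf E)=\int_{X_P}c_1(\mathbf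 E)\wedge[\omega_0]^{n_0-1}$ and for line bundles $\mu_{[\omega_0]}(\mathbf E)=\deg_{\omega_0}(\mathbf E)$. *)

(* Defs.v *)
From HB Require Import structures.
From mathcomp Require Import all_boot all_order all_algebra.
From mathcomp Require Import all_classical all_reals all_analysis.
Set Implicit Arguments. Unset Strict Implicit. Unset Printing Implicit Defensive.
Import Order.TTheory GRing.Theory Num.Theory.
Local Open Scope ring_scope.

(* Abstract model of (Pic(X_P), mu_[omega_0]):
   - Pic : an abelian group (zmodType),
   - mu  : Pic -> int, the slope (= degree) w.r.t. the integral Kaehler class,
   - O   : S -> Pic, the family O_alpha(1), alpha in S = Delta \ I. *)

Definition attained (Pic : zmodType) (mu : Pic -> int) (m : nat) : Prop :=
  exists E : Pic, mu E = m%:Z.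

Definition A_card (Pic : zmodType) (mu : Pic -> int) (n : nat) : nat :=
  #|[set m : 'I_n.+1 | (0 < (m : nat))%N && `[< attained mu m >]]|.

Definition tau (S : finType) (Pic : zmodType) (mu : Pic -> int) (O : S -> Pic) : nat :=
  \big[gcdn/0%N]_(a : S) `|mu (O a)|%N.

(* Main.v *)
Require Import Defs.
From HB Require Import structures.
From mathcomp Require Import all_boot all_order all_algebra.
From mathcomp Require Import all_classical all_reals all_analysis.
From mathcomp Require Import lra zify.
Import Order.TTheory GRing.Theory Num.Theory numFieldNormedType.Exports.
Local Open Scope ring_scope.

Lemma countdiv t n : #|[set m : 'I_n.+1 | (0 < m)%N && (t %| m)%N]| = if (0<t)%N then (n %/ t)%N else 0%N.
Proof.
rewrite -sum1_card big_mkcond /=.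
rewrite (eq_bigr (fun i : 'I_n.+1 => if (0 < i)&&(t%|i) then 1 else 0)%N); last by move=> i _; rewrite inE.
rewrite -(big_mkord (fun _ => true) (fun i => if (0<i)&&(t%|i) then 1 else 0)%N).
elim: n => [|n IH]; first by rewrite big_nat1 /= div0n; case: ifP.
rewrite big_nat_recr //= IH.
case: (posnP t) => [->|tp] /=.
  by [].
by rewrite (divnS _ tp) addnC; case: (t %| n.+1)%N.
Qed.

Section Alg.
Variables (S : finType) (Pic : zmodType) (mu : Pic -> int) (O : S -> Pic).
Hypothesis mu_add : forall E F : Pic, mu (E + F) = mu E + mu F.
Hypothesis O_gen : forall E : Pic, exists k : S -> int, E = \sum_(a : S) O a *~ k a.
Hypothesis deg_pos : forall a : S, 0 < mu (O a).

Lemma mu0 : mu 0 = 0.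
Proof. have h := mu_add 0 0; rewrite addr0 in h; by apply: (@addrI _ (mu 0)); rewrite addr0 -h. Qed.

Lemma muN E : mu (- E) = - mu E.
Proof. by apply/eqP; rewrite -subr_eq0 opprK -mu_add addNr mu0. Qed.

Lemma muMn E n : mu (E *+ n) = mu E *+ n.
Proof. by elim: n => [|n IH]; rewrite ?mulr0n ?mu0 // !mulrS mu_add IH. Qed.

Lemma muMz E z : mu (E *~ z) = mu E * z.
Proof.
case: z => n; first by rewrite -pmulrn muMn -mulr_natr natz.
by rewrite NegzE mulrNz muN -pmulrn muMn mulrN -mulr_natr natz.
Qed.

Lemma attainedP m : attained mu m <-> (tau mu O %| m)%N.
Proof.
split.
  move=> [E HE]; have [k Ek] := O_gen E; rewrite Ek in HE.
  have : ((tau mu O)%:Z %| mu (\sum_a O a *~ k a))%Z.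
    rewrite (big_morph mu mu_add mu0); apply: rpred_sum => a _.
    rewrite muMz; apply: dvdz_mulr; rewrite dvdzE /=.
    exact: (elimT (dvdn_biggcdP _ _ _) (dvdnn (tau mu O))).
  by rewrite HE.
have Ht : exists E, mu E = (tau mu O)%:Z.
  rewrite /tau; elim/big_ind: _.
  - by exists 0; rewrite mu0.
  - move=> x y [E1 H1] [E2 H2].
    have [u [v Huv]] := Bezoutz x y.
    exists (E1 *~ u + E2 *~ v); rewrite mu_add !muMz H1 H2 (mulrC _ u) (mulrC _ v) Huv.
    by [].
  - move=> a _; exists (O a); rewrite gez0_abs //; exact: ltW.
case: Ht => E HE /dvdnP [c ->]; exists (E *+ c).
by rewrite muMn HE PoszM -mulr_natl natz.
Qed.

Lemma A_cardE n : A_card mu n = if (0 < tau mu O)%N then (n %/ tau mu O)%N else 0%N.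
Proof.
rewrite /A_card.
have Eq : forall m, `[< attained mu m >] = (tau mu O %| m)%N.
  by move=> m; apply/idP/idP => [/asboolP/attainedP|/attainedP/asboolP].
under eq_finset => m do rewrite Eq.
exact: countdiv.
Qed.
End Alg.

Lemma ineq (R : realFieldType) (q t n a c : R) : 0 < a -> a * t = 1 -> 0 < c -> c * (n+1) = 1 -> 1 <= n -> n + 1 - t <= q * t -> (a - (c + c)) * n <= q.
Proof. move=> a0 at1 c0 cn n1 h.
have h1 : a * (n + 1 - t) <= a * (q * t) by rewrite ler_wpM2l // ltW.
have e : a * (q * t) = q by rewrite mulrCA at1 mulr1.
have c2 : 2 * c <= 1 by rewrite -cn; nra.
nra. Qed.

Local Open Scope classical_set_scope.

Theorem theoremE (R : realType) (S : finType) (Pic : zmodType)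
  (mu : Pic -> int) (O : S -> Pic)
  (mu_add : forall E F : Pic, mu (E + F) = mu E + mu F)
  (O_gen : forall E : Pic, exists k : S -> int, E = \sum_(a : S) O a *~ k a)
  (deg_pos : forall a : S, 0 < mu (O a)) :
  (fun n : nat => ((A_card mu n)%:R / n%:R : R)) @ \oo --> (((tau mu O)%:R)^-1 : R).
Proof.
have -> : (fun n : nat => ((A_card mu n)%:R / n%:R : R)) =
   (fun n : nat => ((if (0 < tau mu O)%N then (n %/ tau mu O)%N else 0%N)%:R / n%:R : R)).
  by apply: funext => n; rewrite (@A_cardE S Pic mu O mu_add O_gen).
move: (tau mu O) => t.
case: (posnP t) => [->|tp] /=.
  rewrite invr0; under eq_fun do rewrite mul0r; exact: cvg_cst.
have tR : 0 < (t%:R : R) by rewrite ltr0n.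
have Hl : (fun n => (t%:R : R)^-1 - (harmonic n + harmonic n)) @ \oo --> (t%:R : R)^-1.
  have := cvgB (cvg_cst (t%:R : R)^-1) (cvgD (@cvg_harmonic R) (@cvg_harmonic R)).
  rewrite addr0 subr0; by apply; apply: eventually_filter.
apply: (squeeze_cvgr _ Hl (cvg_cst _)).
near=> n.
have n1 : (0 < n)%N by near: n; exists 1%N.
have nR : 0 < (n%:R : R) by rewrite ltr0n.
have h1 : ((n %/ t) * t <= n)%N by exact: leq_divM.
have h2 : (n < (n %/ t).+1 * t)%N by exact: ltn_ceil.
apply/andP; split.
  rewrite ler_pdivlMr //; apply: (@ineq R _ (t%:R)); first by rewrite invr_gt0.
  - by rewrite mulVf // gt_eqF.
  - by rewrite /harmonic invr_gt0 ltr0n.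
  - by rewrite /harmonic natr1 mulVf // pnatr_eq0.
  - by rewrite ler1n.
  - rewrite lerBlDr -natrM natr1 -natrD ler_nat; move: h2; rewrite mulSn; lia.
rewrite ler_pdivrMr // mulrC ler_pdivlMr // -natrM ler_nat.
by [].
Unshelve. all: by end_near.
Qed.
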